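(* There exist an environment $E$ and a total preorder $\succeq$ on $\Pi^E$ such that $\succeq\in\mathrm{Ord}_{\mathrm{MR}}(E)\cap\mathrm{Ord}_{\mathrm{LTL}}(E)$ but $\succeq\notin\mathrm{Ord}_{\mathrm{LAR}}(E)$.
   Context: An environment is a tuple $E=(\mathcal S,\mathcal A,\mathcal T,\mathcal I)$ where $\mathcal S,\mathcal A$ are finite nonempty sets, $\mathcal T:\mathcal S\times\mathcal A\to\Delta(\mathcal S)$ and $\mathcal I\in\Delta(\mathcal S)$. A policy is a map $\pi:\mathcal S\to\Delta(\mathcal A)$ (stationary, possibly stochastic); $\Pi^E$ denotes the set of all policies. A trajectory $\xi=(s_0,a_0,s_1,a_1,\dots)\in\Xi:=\mathcal S\times(\mathcal A\times\mathcal S)^\omega$ is generated under $\pi$ by $s_0\sim\mathcal I$, $a_t\sim\pi(s_t)$, $s_{t+1}\sim\mathcal T(s_t,a_t)$; $\mathbb E^\pi_\xi$ denotes expectation under this distribution. An objective-specification formalism $X$ assigns to each environment $E$ a set of objective specifications, each inducing a total preorder $\succeq$ on $\Pi^E$; $\mathrm{Ord}_X(E)$ is the set of total preorders so induced. A specification defining a scalar $J:\Pi^E\to\mathbb R$ induces $\pi_1\succeq\pi_2\iff J(\pi_1)\ge J(\pi_2)$. MR: specification $(\mathcal R,\gamma)$, $\mathcal R:\mathcal S\times\mathcal A\times\mathcal S\to\mathbb R$, $\gamma\in[0,1)$, $J(\pi)=\mathbb E^\pi_\xi[\sum_{t=0}^\infty\gamma^t\mathcal R(s_t,a_t,s_{t+1})]$.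 LAR: specification $(\mathcal R)$, $\mathcal R:\mathcal S\times\mathcal A\times\mathcal S\to\mathbb R$, $J(\pi)=\lim_{N\to\infty}\frac1N\mathbb E^\pi_\xi[\sum_{t=0}^{N-1}\mathcal R(s_t,a_t,s_{t+1})]$. LTL: specification $(\varphi)$ with $\varphi$ a linear temporal logic formula whose atomic propositions are the transitions $(s,a,s')\in\mathcal S\times\mathcal A\times\mathcal S$, built with $\neg,\lor,\land,\to$ and the temporal operators $\bigcirc$ (next), $\square$ (always), $\lozenge$ (eventually), $\mathcal U$ (until). Semantics on a trajectory $\xi$ at time $t$: an atomic proposition $(s,a,s')$ holds iff $(s_t,a_t,s_{t+1})=(s,a,s')$; $\bigcirc\psi$ holds iff $\psi$ holds at $t+1$; $\square\psi$ iff $\psi$ holds at every $t'\ge t$; $\lozenge\psi$ iff $\psi$ holds at some $t'\ge t$; $\psi\,\mathcal U\,\chi$ iff there is $t'\ge t$ with $\chi$ holding at $t'$ and $\psi$ holding at every $t''$ with $t\le t''<t'$; Boolean connectives as usual. $\varphi(\xi)=1$ if $\varphi$ holds at time $0$ and $0$ otherwise; $J(\pi)=\mathbb E^\pi_\xi[\varphi(\xi)]$. *)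

(* Defs.v *)
From HB Require Import structures.
From mathcomp Require Import all_boot all_order all_algebra.
From mathcomp Require Import all_classical all_reals all_analysis.
Set Implicit Arguments. Unset Strict Implicit. Unset Printing Implicit Defensive.
Import Order.TTheory GRing.Theory Num.Theory numFieldNormedType.Exports.
Local Open Scope ring_scope.
Local Open Scope classical_set_scope.

Section Defs.
Variable R : realType.

Definition is_dist (T : finType) (p : T -> R) : Prop :=
  (forall x, 0 <= p x) /\ \sum_(x : T) p x = 1.

Record env := Env {
  St : finType;
  Ac : finType;
  St_nonempty : (0 < #|St|)%N;
  Ac_nonempty : (0 < #|Ac|)%N;
  Tr : St -> Ac -> St -> R;
  Tr_dist : forall s a, is_dist (Tr s a);
  Init : St -> R;
  Init_dist : is_dist Init }.

Record policy (E : env) := Policy {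
  pol : St E -> Ac E -> R;
  pol_dist : forall s, is_dist (pol s) }.

(* Infinite trajectories xi = (s_0,a_0,s_1,a_1,...) represented as
   the sequence of state-action pairs t |-> (s_t, a_t). *)
Definition traj (E : env) := nat -> (St E * Ac E)%type.

Section Prob.
Variables (E : env) (pi : policy E).

Fixpoint pp_from (x : St E * Ac E) (r : seq (St E * Ac E)) : R :=
  match r with
  | [::] => 1
  | y :: r' => Tr x.1 x.2 y.1 * pol pi y.1 y.2 * pp_from y r'
  end.

Definition prefix_prob (w : seq (St E * Ac E)) : R :=
  match w with
  | [::] => 1
  | x :: r => Init x.1 * pol pi x.1 x.2 * pp_from x r
  end.

(* E^pi[ R(s_t, a_t, s_{t+1}) ], computed from the law of the prefix of
   length t+2. *)
Definition exp_reward (Rw : St E -> Ac E -> St E -> R) (t : nat) : R :=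
  \sum_(w : (t.+2).-tuple (St E * Ac E))
     prefix_prob w *
     Rw (tnth w (inord t)).1 (tnth w (inord t)).2 (tnth w (inord t.+1)).1.

Definition cylinder (w : seq (St E * Ac E)) : set (traj E) :=
  [set xi | forall i, (i < size w)%N -> xi i = nth (xi i) w i].

Definition ocyl (c : option (seq (St E * Ac E))) : set (traj E) :=
  if c is Some w then cylinder w else set0.
Definition ocyl_prob (c : option (seq (St E * Ac E))) : R :=
  if c is Some w then prefix_prob w else 0.

(* The trajectory law P^pi on measurable sets is given by the Caratheodory
   outer measure generated by the cylinder premeasure (Ionescu-Tulcea). *)
Definition traj_outer (X : set (traj E)) : \bar R :=
  ereal_inf [set (\sum_(n <oo) (ocyl_prob (c n))%:E)%E |
             c in [set c : nat -> option (seq (St E * Ac E)) |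
                     X `<=` \bigcup_n ocyl (c n)]].
End Prob.

(* Markovian rewards: J(pi) = E[sum_t gamma^t R(s_t,a_t,s_{t+1})]
   = sum_t gamma^t E[R(s_t,a_t,s_{t+1})]  (bounded rewards, gamma < 1). *)
Definition J_MR (E : env) (Rw : St E -> Ac E -> St E -> R) (gamma : R)
  (pi : policy E) : R :=
  limn (series (fun t => gamma ^+ t * exp_reward pi Rw t)).

Definition J_LAR (E : env) (Rw : St E -> Ac E -> St E -> R)
  (pi : policy E) : R :=
  limn (fun N => N%:R^-1 * \sum_(t < N) exp_reward pi Rw t).

Inductive ltl (S A : Type) : Type :=
  | LAtom : S -> A -> S -> ltl S A
  | LNot : ltl S A -> ltl S A
  | LOr : ltl S A -> ltl S A -> ltl S A
  | LAnd : ltl S A -> ltl S A -> ltl S A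
  | LImp : ltl S A -> ltl S A -> ltl S A
  | LNext : ltl S A -> ltl S A
  | LAlways : ltl S A -> ltl S A
  | LEventually : ltl S A -> ltl S A
  | LUntil : ltl S A -> ltl S A -> ltl S A.

Fixpoint ltl_holds (E : env) (xi : traj E) (t : nat)
  (phi : ltl (St E) (Ac E)) : Prop :=
  match phi with
  | LAtom s a s' => (xi t).1 = s /\ (xi t).2 = a /\ (xi t.+1).1 = s'
  | LNot p => ~ ltl_holds xi t p
  | LOr p q => ltl_holds xi t p \/ ltl_holds xi t q
  | LAnd p q => ltl_holds xi t p /\ ltl_holds xi t q
  | LImp p q => ltl_holds xi t p -> ltl_holds xi t q
  | LNext p => ltl_holds xi t.+1 p
  | LAlways p => forall t', (t <= t')%N -> ltl_holds xi t' p
  | LEventually p => exists t', (t <= t')%N /\ ltl_holds xi t' p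
  | LUntil p q => exists t', (t <= t')%N /\ ltl_holds xi t' q /\
                    forall t'', (t <= t'')%N -> (t'' < t')%N -> ltl_holds xi t'' p
  end.

Definition J_LTL (E : env) (phi : ltl (St E) (Ac E)) (pi : policy E) : R :=
  fine (traj_outer pi [set xi | ltl_holds xi 0 phi]).

Definition induced_by (E : env) (J : policy E -> R)
  (ord : policy E -> policy E -> Prop) : Prop :=
  forall p1 p2, ord p1 p2 <-> J p2 <= J p1.

Definition in_Ord_MR (E : env) (ord : policy E -> policy E -> Prop) : Prop :=
  exists (Rw : St E -> Ac E -> St E -> R) (gamma : R),
    0 <= gamma < 1 /\ induced_by (J_MR Rw gamma) ord.

Definition in_Ord_LAR (E : env) (ord : policy E -> policy E -> Prop) : Prop :=
  exists Rw : St E -> Ac E -> St E -> R, induced_by (J_LAR Rw) ord.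

Definition in_Ord_LTL (E : env) (ord : policy E -> policy E -> Prop) : Prop :=
  exists phi : ltl (St E) (Ac E), induced_by (J_LTL phi) ord.

Definition total_preorder (T : Type) (ord : T -> T -> Prop) : Prop :=
  (forall x y, ord x y \/ ord y x) /\
  (forall x y z, ord x y -> ord y z -> ord x z).

End Defs.

(* Main.v *)
Require Import Defs.
From mathcomp Require Import all_boot all_order all_algebra.
From mathcomp Require Import all_classical all_reals all_analysis.
From mathcomp Require Import ring zify.
Set Implicit Arguments. Unset Strict Implicit. Unset Printing Implicit Defensive.
Import Order.TTheory GRing.Theory Num.Theory numFieldNormedType.Exports.

Section Gen.
Local Open Scope ring_scope.
Local Open Scope classical_set_scope.
Variable R : realType.
Variables (E : env R) (pi : policy E).
Local Notation T := (St E * Ac E)%type.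
Local Notation P := (prefix_prob pi).

Definition step (u : seq T) (y : T) : R :=
  match u with
  | [::] => Init y.1 * pol pi y.1 y.2
  | x :: r => Tr (last x r).1 (last x r).2 y.1 * pol pi y.1 y.2
  end.

Lemma pp_rcons x r y : pp_from pi x (rcons r y) =
  pp_from pi x r * (Tr (last x r).1 (last x r).2 y.1 * pol pi y.1 y.2).
Proof.
elim: r x => [|z r IH] x /=; first by rewrite mulr1 mul1r.
by rewrite IH !mulrA.
Qed.

Lemma P_rcons u y : P (rcons u y) = P u * step u y.
Proof.
case: u => [|x r] /=; first by rewrite mulr1 mul1r.
by rewrite pp_rcons !mulrA.
Qed.

Lemma sum_pol (f : St E -> R) :
  \sum_(y : T) f y.1 * pol pi y.1 y.2 = \sum_s f s.
Proof.
rewrite -(pair_big xpredT xpredT (fun s a => f s * pol pi s a)) /=.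
apply: eq_bigr => s _; by rewrite -mulr_sumr (pol_dist pi s).2 mulr1.
Qed.

Lemma step_sum u : \sum_y step u y = 1.
Proof.
case: u => [|x r] /=.
  by rewrite (sum_pol (@Init R E)) (Init_dist E).2.
by rewrite (sum_pol (Tr (last x r).1 (last x r).2)) (Tr_dist _ _).2.
Qed.

Lemma step_ge0 u y : 0 <= step u y.
Proof.
case: u => [|x r] /=; apply: mulr_ge0;
  by [apply: (Init_dist E).1 | apply: (pol_dist pi _).1 | apply: (Tr_dist _ _).1].
Qed.

Lemma step_le1 u y : step u y <= 1.
Proof.
rewrite -(step_sum u) (bigD1 y) //= lerDl sumr_ge0 // => z _.
exact: step_ge0.
Qed.

Lemma P_ge0 u : 0 <= P u.
Proof.
elim/last_ind: u => [|u y IH] /=; first by [].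
by rewrite P_rcons mulr_ge0 // step_ge0.
Qed.

Lemma P_cat u s : P (u ++ s) <= P u.
Proof.
elim/last_ind: s => [|s y IH]; first by rewrite cats0.
rewrite -rcons_cat P_rcons; apply: le_trans IH.
by rewrite ler_piMr ?P_ge0 ?step_le1.
Qed.

Lemma P_sum u : \sum_y P (rcons u y) = P u.
Proof.
under eq_bigr do rewrite P_rcons.
by rewrite -mulr_sumr step_sum mulr1.
Qed.


Definition meet (u v : seq T) : R :=
  if prefix v u then P u else if prefix u v then P v else 0.

Lemma meet_ge0 u v : 0 <= meet u v.
Proof.
rewrite /meet; case: ifP => _; first exact: P_ge0.
case: ifP => _ //; exact: P_ge0.
Qed.

Lemma meet_le u v : meet u v <= P v.
Proof.
rewrite /meet; case: ifP => [/prefixP [s ->]|_]; first exact: P_cat.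
case: ifP => _ //; exact: P_ge0.
Qed.

Lemma meet_sum u v : \sum_y meet (rcons u y) v = meet u v.
Proof.
case: (boolP (prefix v u)) => hvu.
  have h y : prefix v (rcons u y) := prefix_trans hvu (prefix_rcons u y).
  rewrite /meet hvu; under eq_bigr do rewrite h.
  exact: P_sum.
case: (boolP (prefix u v)) => huv.
  move/prefixP: (huv) => [s hs].
  case: s hs => [|z s] hs.
    by move: hvu; rewrite hs cats0 prefix_refl.
  have h y : meet (rcons u y) v = if y == z then P v else 0.
    rewrite /meet hs -cats1 !prefix_catr // prefix_cons prefixs0 eqxx /=.
    rewrite prefix0s andbT (eq_sym z y).
    case: (boolP (y == z)) => //= /eqP ->.
    by case: ifP => // /eqP ->.
  under eq_bigr do rewrite h.
  by rewrite -big_mkcond big_pred1_eq /meet (negbTE hvu) huv.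
rewrite /meet (negbTE hvu) (negbTE huv) big1 // => y _.
case: ifP => [/prefixP [t ht]|_].
  exfalso; case/lastP: t ht => [|t y'] ht.
    by move: huv; rewrite -(cats0 v) -ht prefix_rcons.
  move: ht; rewrite -rcons_cat => /rcons_inj [hu _].
  by move: hvu; rewrite hu prefix_prefix.
case: ifP => // h; exfalso.
by move: huv; rewrite (prefix_trans (prefix_rcons u y) h).
Qed.


Definition mo u (c : option (seq T)) : R := if c is Some v then meet u v else 0.

Lemma mo_ge0 u c : 0 <= mo u c.
Proof. case: c => [v|] //=; exact: meet_ge0. Qed.

Lemma mo_sum u c : \sum_y mo (rcons u y) c = mo u c.
Proof. case: c => [v|] /=; [exact: meet_sum | exact: big1]. Qed.

Local Open Scope ereal_scope.

Definition D (c : nat -> option (seq T)) u : \bar R :=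
  \sum_(n <oo) (mo u (c n))%:E.

Lemma D_sum c u : \sum_y D c (rcons u y) = D c u.
Proof.
rewrite /D -nneseries_sum; last by move=> y n _; rewrite lee_fin mo_ge0.
apply: eq_eseriesr => n _.
by rewrite sumEFin mo_sum.
Qed.

Lemma konig c w : cylinder w `<=` \bigcup_n ocyl (c n) -> (P w)%:E <= D c w.
Proof.
move=> hcov; rewrite leNgt; apply/negP => hlt.
have step_ex u : D c u < (P u)%:E ->
    exists y, D c (rcons u y) < (P (rcons u y))%:E.
  move=> hu; case: (pselect (exists y, D c (rcons u y) < (P (rcons u y))%:E)) => // hno.
  exfalso; have : (P u)%:E <= D c u.
    rewrite -P_sum -D_sum -sumEFin; apply: lee_sum => y _.
    rewrite leNgt; apply/negP => h; apply: hno; by exists y.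
  by rewrite leNgt hu.
pose next u := if [pick y | D c (rcons u y) < (P (rcons u y))%:E] is Some y
  then rcons u y else u.
pose U k := iter k next w.
have inv k : D c (U k) < (P (U k))%:E /\ size (U k) = (size w + k)%N.
  elim: k => [|k [IH1 IH2]]; first by rewrite addn0.
  rewrite /U /= -/(U k) /next; case: pickP => [y hy|hn].
    by rewrite size_rcons IH2 addnS.
  by exfalso; case: (step_ex _ IH1) => y hy; move: (hn y); rewrite hy.
have pre k j : prefix (U k) (U (j + k)%N).
  elim: j => [|j IH]; first exact: prefix_refl.
  apply: (prefix_trans IH); rewrite addSn /U /= -/(U (j + k)%N) /next.
  case: pickP => [y _|_]; [exact: prefix_rcons | exact: prefix_refl].
have [s0 _] := card_gt0P (St_nonempty E).
have [a0 _] := card_gt0P (Ac_nonempty E).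
pose x0 : T := (s0, a0).
pose xi : traj E := fun i => nth x0 (U i.+1) i.
have nth_pre (a b : seq T) i : prefix a b -> (i < size a)%N ->
    nth x0 a i = nth x0 b i.
  by move=> /prefixP [s ->] hi; rewrite nth_cat hi.
have xiE k i : (i < size (U k))%N -> xi i = nth x0 (U k) i.
  move=> hi; rewrite /xi.
  rewrite (nth_pre _ _ _ (pre k i.+1) hi).
  rewrite (nth_pre _ _ _ (pre i.+1 k)); first by rewrite addnC.
  by rewrite (inv i.+1).2 addnS ltnS leq_addl.
have hxi : cylinder w xi.
  move=> i hi; rewrite (xiE 0%N) /U /=; last by [].
  exact: set_nth_default.
case: (hcov _ hxi) => n _.
case hcn : (c n) => [v|] //= hv.
pose k := size v.
have hsz : (k <= size (U k))%N by rewrite (inv k).2 leq_addl.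
have hpre : prefix v (U k).
  rewrite prefixE; apply/eqP/(@eq_from_nth _ x0); first by rewrite size_takel.
  move=> i; rewrite size_takel // => hi.
  rewrite nth_take // -xiE; last by apply: leq_trans hsz.
  by rewrite hv // (set_nth_default x0).
have hm : mo (U k) (c n) = P (U k) by rewrite hcn /= /meet hpre.
have : (P (U k))%:E <= D c (U k).
  rewrite -hm /D; apply: le_trans (nneseries_lim_ge n.+1 _); last first.
    by move=> m _ _; rewrite lee_fin mo_ge0.
  rewrite big_nat_recr //= leeDr // sume_ge0 // => m _.
  by rewrite lee_fin mo_ge0.
by rewrite leNgt (inv k).1.
Qed.


Lemma outer_cyl w : traj_outer pi (cylinder w) = (P w)%:E.
Proof.
apply/eqP; rewrite eq_le; apply/andP; split.
  pose c := fun n : nat => if n is 0%N then Some w else None.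
  have -> : (P w)%:E = \sum_(n <oo) (ocyl_prob pi (c n))%:E.
    rewrite (@nneseries_split _ _ 0 1); last first.
      by case => [|n] _ //=; rewrite lee_fin P_ge0.
    rewrite big_nat1 /= eseries0 ?adde0 //.
    by case => [|n].
  apply: ereal_inf_lbound; exists c => //.
  by move=> xi h; exists 0%N.
apply: le_ereal_inf_tmp => _ [c hc <-].
apply: le_trans (konig hc) _.
apply: lee_nneseries => [n _ _|n _]; first by rewrite lee_fin mo_ge0.
by rewrite lee_fin; case: (c n) => [v|] //=; exact: meet_le.
Qed.

End Gen.

Section Ex.
Local Open Scope ring_scope.
Local Open Scope classical_set_scope.
Variable R : realType.

Definition trB (s a s' : bool) : R := if s' then 1 else 0.
Definition initB (s : bool) : R := if s then 0 else 1.

Lemma trB_dist s a : is_dist (trB s a).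
Proof. by split; [case; rewrite /trB | rewrite big_bool /trB /= addr0]. Qed.
Lemma initB_dist : is_dist initB.
Proof. by split; [case; rewrite /initB | rewrite big_bool /initB /= add0r]. Qed.
Lemma cardB : (0 < #|{: bool}|)%N. Proof. by rewrite card_bool. Qed.

Definition EB : env R := Env cardB cardB trB_dist initB_dist.

Lemma TrE s a s' : Tr (e:=EB) s a s' = if s' then 1 else 0. Proof. by []. Qed.
Lemma InitE s : Init (e:=EB) s = if s then 0 else 1. Proof. by []. Qed.

Definition pol1 (s a : bool) : R := if a then 1 else 0.
Definition pol2 (s a : bool) : R := if s then (if a then 1 else 0) else (if a then 0 else 1).
Lemma pol1_dist s : is_dist (pol1 s).
Proof. by split; [case; rewrite /pol1 | rewrite big_bool /pol1 /= addr0]. Qed.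
Lemma pol2_dist s : is_dist (pol2 s).
Proof.
split; first by case; case: s; rewrite /pol2.
by rewrite big_bool /pol2; case: s; rewrite /= ?addr0 ?add0r.
Qed.
Definition P1 : policy EB := @Policy R EB pol1 pol1_dist.
Definition P2 : policy EB := @Policy R EB pol2 pol2_dist.

End Ex.
Section Ex2.
Local Open Scope ring_scope.
Local Open Scope classical_set_scope.
Variable R : realType.

Lemma sum2 (T : finType) (F : 2.-tuple T -> R) :
  \sum_w F w = \sum_x \sum_y F [tuple x; y].
Proof.
rewrite pair_big /=.
rewrite (reindex (fun p : T * T => [tuple p.1; p.2])) /=; last first.
  apply: onW_bij; exists (fun w : 2.-tuple T => (thead w, tnth w (inord 1))).
    by case=> x y /=; rewrite /thead !(tnth_nth x) /= inordK.
  move=> w; apply: val_inj => /=.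
  case: w => [[|a [|b [|]]] //= hw].
  by rewrite /thead !(tnth_nth a) /= inordK.
by [].
Qed.

Definition RwB (s a s' : bool) : R := if ~~ s && a then 1 else 0.

Lemma e0 (pi : policy (EB R)) : exp_reward pi RwB 0 = pol pi false true.
Proof.
rewrite /exp_reward sum2.
transitivity (\sum_(x : St (EB R) * Ac (EB R)) RwB x.1 x.2 true * initB R x.1 * pol pi x.1 x.2).
  apply: eq_bigr => x _.
  transitivity (\sum_(y : St (EB R) * Ac (EB R)) (RwB x.1 x.2 true * initB R x.1 * pol pi x.1 x.2) *
      (Tr x.1 x.2 y.1 * pol pi y.1 y.2)).
    apply: eq_bigr => y _.
    rewrite !(tnth_nth x) /= !inordK //= mulr1.
    rewrite /RwB /=; ring.
  rewrite -mulr_sumr (sum_pol pi (Tr x.1 x.2)) (Tr_dist _ _).2 mulr1 //.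
rewrite -(pair_big xpredT xpredT (fun (s : St (EB R)) (a : Ac (EB R)) => RwB s a true * initB R s * pol pi s a)) /=.
rewrite !big_bool /RwB /initB /=.
ring.
Qed.


Lemma JMR_E (pi : policy (EB R)) : @J_MR R (EB R) RwB 0 pi = pol pi false true.
Proof.
rewrite /J_MR; apply: norm_lim_near_cst.
exists 1%N => // -[//|n] _.
rewrite /series /= big_nat_recl // expr0 mul1r e0 big1 ?addr0 // => i _.
by rewrite expr0n /= mul0r.
Qed.

Definition phiB : ltl (St (EB R)) (Ac (EB R)) :=
  LOr (LAtom (false : St (EB R)) (true : Ac (EB R)) (false : St (EB R)))
      (LAtom (false : St (EB R)) (true : Ac (EB R)) (true : St (EB R))).

Lemma JLTL_E (pi : policy (EB R)) : J_LTL phiB pi = pol pi false true.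
Proof.
rewrite /J_LTL.
have -> : [set xi : traj (EB R) | ltl_holds xi 0 phiB] = cylinder [:: ((false : St (EB R)), (true : Ac (EB R)))].
  apply/seteqP; split => xi /=.
    move=> h [|i] //= _.
    by case: h => [[h1 [h2 _]]|[h1 [h2 _]]]; case: (xi 0%N) h1 h2 => ? ? /= -> ->.
  move/(_ 0%N isT) => /= h; rewrite h /=.
  by case: ((xi 1%N).1); [right|left].
by rewrite outer_cyl /= mulr1 /initB mul1r.
Qed.


Local Notation T := (St (EB R) * Ac (EB R))%type.
Definition gB (x : T) : T := if x.1 then x else (x.1, ~~ x.2).

Lemma gBK : involutive gB.
Proof. by case => [[] a] //=; rewrite /gB /= negbK. Qed.

Lemma L_pp (q1 q2 : policy (EB R)) : (forall a, pol q1 true a = pol q2 true a) ->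
  forall r (x x' : T), pp_from q1 x r = pp_from q2 x' r.
Proof.
move=> hq; elim => [|y r IH] x x' //=.
rewrite (IH y y); case: y => [[] a] /=; rewrite /trB ?mul0r //.
by rewrite hq.
Qed.

Lemma L_zero (q : policy (EB R)) r (x : T) :
  has (fun y : T => ~~ y.1) r -> pp_from q x r = 0.
Proof.
elim: r x => //= y r IH x /orP [h|h].
  by case: y h => [[] a] //= _; rewrite /trB !mul0r.
by rewrite IH ?mulr0.
Qed.

Lemma L_map (q : policy (EB R)) r (x : T) : pp_from q x (map gB r) = pp_from q x r.
Proof.
elim: r x => //= y r IH x.
rewrite IH (@L_pp q q _ r (gB y) y) //.
by case: y => [[] a] //=; rewrite /trB !mul0r.
Qed.

Lemma eS (Rw : St (EB R) -> Ac (EB R) -> St (EB R) -> R) t :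
  exp_reward (P1 R) Rw t.+1 = exp_reward (P2 R) Rw t.+1.
Proof.
have inj : injective (map_tuple gB : (t.+3).-tuple T -> (t.+3).-tuple T).
  apply: (can_inj (g := map_tuple gB)) => w; apply: val_inj => /=.
  by rewrite -map_comp (eq_map gBK) map_id.
rewrite /exp_reward [RHS](reindex_inj inj) /=.
apply: eq_bigr => w _.
rewrite !tnth_map.
set a := tnth w (inord t.+1); set b := tnth w (inord t.+2).
have [x [r hw]] : exists x r, tval w = x :: r.
  by have := size_tuple w; case: (tval w) => [|x r] //= _; exists x, r.
have szr : size r = t.+2 by have := size_tuple w; rewrite hw /= => -[].
have mem i : (0 < i < t.+3)%N -> tnth w (inord i) \in r.
  move=> /andP [h0 hi]; rewrite (tnth_nth x) hw inordK //.
  case: i h0 hi => // i _ hi /=; apply: mem_nth; by rewrite szr.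
have ha : a \in r by apply: mem; apply/andP; split; lia.
have hb : b \in r by apply: mem; apply/andP; split; lia.
have hmw : tval (map_tuple gB w) = gB x :: map gB r by rewrite /= hw.
rewrite /prefix_prob hw /= L_map.
case: (boolP (has (fun y : T => ~~ y.1) r)) => hh.
  by rewrite !L_zero ?mulr0 ?mul0r.
have gid y : y \in r -> gB y = y.
  move=> hy; case: y hy => [[] c] // hy.
  by exfalso; move/hasPn: hh => /(_ _ hy).
rewrite (gid a ha) (gid b hb) (@L_pp (P2 R) (P1 R) _ r (gB x) x) //.
by case: x {hw hmw} => [[] []]; rewrite /= /initB /pol1 /pol2 /= ?mul0r.
Qed.


Lemma JLAR_eq (Rw : St (EB R) -> Ac (EB R) -> St (EB R) -> R) :
  J_LAR Rw (P1 R) = J_LAR Rw (P2 R).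
Proof.
set d := exp_reward (P1 R) Rw 0 - exp_reward (P2 R) Rw 0.
set u := fun N : nat => N%:R^-1 * \sum_(t < N) exp_reward (P1 R) Rw t.
set v := fun N : nat => N%:R^-1 * \sum_(t < N) exp_reward (P2 R) Rw t.
have huvN N : u N = v N + d * N%:R^-1.
  case: N => [|N]; first by rewrite /u /v /= !big_ord0 !mulr0 invr0 mulr0 addr0.
  rewrite /u /v /= !big_ord_recl.
  under eq_bigr do rewrite eS.
  rewrite /d; ring.
have huv : u = v + (fun N : nat => d * N%:R^-1).
  by apply: funext => N; rewrite huvN.
have h0 : (fun N : nat => d * N%:R^-1) @ \oo --> (0 : R).
  rewrite -[X in _ --> X](mulr0 d); apply: cvgMl_tmp.
  rewrite -cvg_shiftS; exact: cvg_harmonic.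
rewrite /J_LAR -/u -/v /lim /lim_in; congr get; apply: funext => l; apply: propext.
split => h.
  have -> : v = u - (fun N : nat => d * N%:R^-1) by rewrite huv addrK.
  rewrite -[X in _ --> X]subr0; exact: cvgB.
rewrite huv -[X in _ --> X]addr0; exact: cvgD.
Qed.

End Ex2.

Theorem mainTheorem9 (R : realType) :
  exists (E : env R) (ord : policy E -> policy E -> Prop),
    total_preorder ord /\
    in_Ord_MR ord /\ in_Ord_LTL ord /\ ~ in_Ord_LAR ord.
Proof.
exists (EB R), (fun p1 p2 : policy (EB R) =>
  (pol p2 (false : St (EB R)) (true : Ac (EB R)) <= pol p1 false true)%R).
split.
  split; first by move=> x y; apply/orP; exact: le_total.
  by move=> x y z h1 h2; exact: le_trans h2 h1.
split.
  exists (@RwB R), 0%R; split; first by rewrite lexx ltr01.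
  by move=> q1 q2; rewrite !JMR_E.
split.
  by exists (phiB R) => q1 q2; rewrite !JLTL_E.
move=> [Rw h].
have := (h (P2 R) (P1 R)).2; rewrite JLAR_eq lexx => /(_ isT).
by rewrite /= /pol1 /pol2 /= ler10.
Qed.
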